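(* Let $f\in\mathcal{F}_{G,M}$ be a WTP function, $\tilde f$ its concave relaxation, and $\widetilde F(\tilde x)=\max_{\tilde y\in\widetilde{\mathcal{Y}}_{\mathcal{M}}(\tilde x)}\tilde f(\tilde y)$ for $\tilde x\in\widetilde{\mathcal{X}}_\ell$. Then $\widetilde F$ is $GM^2\sqrt n$-Lipschitz with respect to the Euclidean norm on $\widetilde{\mathcal{X}}_\ell$.
   Context: $\mathcal{M}$ is a matroid on $[n]$ with matroid polytope $\mathcal{P}(\mathcal{M})$. $\widetilde{\mathcal{X}}_\ell=\{\tilde x\in[0,1]^n:\sum_i\tilde x_i\le\ell\}$, $\widetilde{\mathcal{Y}}_{\mathcal{M}}(\tilde x)=\{\tilde y\in[0,1]^n:\tilde y\in\mathcal{P}(\mathcal{M}),\tilde y\le\tilde x\}$. A WTP function is $f(y)=\sum_{j\in\mathcal{C}}c_j\min\{b_j,y\cdot w_j\}$ for $y\in\{0,1\}^n$ with finite $\mathcal{C}$, $c_j>0$, $b_j\in\mathbb{R}_{\ge0}\cup\{\infty\}$, $w_j\in\mathbb{R}^n_{\ge0}$; $\tilde f$ is the same formula on $[0,1]^n$. $\mathcal{F}_{G,M}$ is the class of WTP functions with $|\mathcal{C}|\le G$ and $c_j\le M$, $b_j\le M$, $\|w_j\|_\infty\le M$ for all $j\in\mathcal{C}$. *)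

(* Defs.v *)
From HB Require Import structures.
From mathcomp Require Import all_boot all_order all_algebra.
From mathcomp Require Import all_classical all_reals.

Set Implicit Arguments. Unset Strict Implicit. Unset Printing Implicit Defensive.
Import Order.TTheory GRing.Theory Num.Theory.
Local Open Scope ring_scope.

Record matroid (n : nat) := Matroid {
  indep : {set 'I_n} -> bool;
  indep0 : indep (finset.set0 : {set 'I_n});
  indep_sub : forall A B : {set 'I_n}, (A \subset B) -> indep B -> indep A;
  indep_aug : forall A B : {set 'I_n}, indep A -> indep B -> (#|A| < #|B|)%N ->
     exists2 x, x \in B :\: A & indep (x |: A)
}.

Definition in_matroid_polytope (R : realType) (n : nat) (Mt : matroid n)
    (y : 'I_n -> R) : Prop :=
  exists lam : {set 'I_n} -> R,
    [/\ forall S, 0 <= lam S,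
        forall S, ~~ indep Mt S -> lam S = 0,
        \sum_(S : {set 'I_n}) lam S = 1
      & forall i, y i = \sum_(S : {set 'I_n}) lam S * (i \in S)%:R].

Definition Xl (R : realType) (n l : nat) (x : 'I_n -> R) : Prop :=
  (forall i, 0 <= x i <= 1) /\ \sum_i x i <= l%:R.

Definition Yset (R : realType) (n : nat) (Mt : matroid n) (x : 'I_n -> R)
    : set ('I_n -> R) :=
  [set y | [/\ forall i, 0 <= y i <= 1, in_matroid_polytope Mt y
            & forall i, y i <= x i]].

(* WTP function with data (c_j, b_j, w_j)_{j < k}, evaluated on [0,1]^n
   (concave relaxation f~); b_j : \bar R, +oo allowed. *)
Definition wtp_relax (R : realType) (n k : nat) (c : 'I_k -> R)
    (b : 'I_k -> \bar R) (w : 'I_k -> 'I_n -> R) (y : 'I_n -> R) : R :=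
  \sum_(j < k) c j * fine (Order.min (b j) (\sum_i y i * w j i)%:E).

Definition in_FGM (R : realType) (n k : nat) (G : nat) (M : R) (c : 'I_k -> R)
    (b : 'I_k -> \bar R) (w : 'I_k -> 'I_n -> R) : Prop :=
  (k <= G)%N /\
  forall j, [/\ 0 < c j, c j <= M, (0 <= b j)%E, (b j <= M%:E)%E
             & forall i, 0 <= w j i /\ `|w j i| <= M].

(* F~(x) = max_{y in Y~_M(x)} f~(y), written as a supremum (attained). *)
Definition Ftilde (R : realType) (n k : nat) (Mt : matroid n) (c : 'I_k -> R)
    (b : 'I_k -> \bar R) (w : 'I_k -> 'I_n -> R) (x : 'I_n -> R) : R :=
  sup [set wtp_relax c b w y | y in Yset Mt x].

Definition eucl_dist (R : realType) (n : nat) (x x' : 'I_n -> R) : R :=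
  Num.sqrt (\sum_i (x i - x' i) ^+ 2).

(* Main.v *)
Require Import Defs.
From HB Require Import structures.
From mathcomp Require Import all_boot all_order all_algebra.
From mathcomp Require Import all_classical all_reals.
From mathcomp Require Import ring lra.
Import Order.TTheory GRing.Theory Num.Theory.
Local Open Scope ring_scope.

Lemma wtp_real (R : realType) (n k G : nat) (M : R) (c : 'I_k -> R)
    (b : 'I_k -> \bar R) (w : 'I_k -> 'I_n -> R) (y : 'I_n -> R) :
  in_FGM G M c b w ->
  wtp_relax c b w y = \sum_j c j * Num.min (fine (b j)) (\sum_i y i * w j i).
Proof.
move=> [_ hF]; apply: eq_bigr => j _; congr (_ * _).
have [_ _ b0 bM _] := hF j.
case: (b j) b0 bM => [r| |] //= _ _.
by rewrite -EFin_min.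
Qed.
Arguments wtp_real {R n k G M c b w} y.

Lemma min_lip (R : realType) (r s s' : R) : s' <= s ->
  Num.min r s - Num.min r s' <= s - s'.
Proof.
by move=> h; case: (ltP r s) => h1; case: (ltP r s') => h2; lra.
Qed.

Lemma poly0 (R : realType) (n : nat) (Mt : matroid n) :
  in_matroid_polytope Mt (fun _ : 'I_n => (0 : R)).
Proof.
exists (fun S : {set 'I_n} => ((S == finset.set0)%:R : R)); split.
- by move=> S; rewrite ler0n.
- by move=> S; case: eqP => // ->; rewrite indep0.
- by rewrite (bigD1 finset.set0) //= eqxx big1 ?addr0 // => S /negbTE ->.
- move=> i; rewrite (bigD1 finset.set0) //= inE mulr0 big1 ?addr0 // => S /negbTE ->.
  by rewrite mul0r.
Qed.
Lemma poly_scale1 (R : realType) (n : nat) (Mt : matroid n) (y z : 'I_n -> R)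
   (i : 'I_n) (t : R) : in_matroid_polytope Mt y -> 0 <= t <= 1 ->
   (forall j, z j = if j == i then t * y i else y j) -> in_matroid_polytope Mt z.
Proof.
move=> [lam [lam0 lamI lam1 lamy]] /andP[t0 t1] hz.
pose K (S T : {set 'I_n}) : R :=
  (S == T)%:R * (if i \in S then t else 1) + (i \in S)%:R * (1 - t) * (S :\ i == T)%:R.
have sumK S : \sum_T K S T = 1.
  rewrite big_split /= -mulr_suml -mulr_sumr.
  rewrite (bigD1 S) //= eqxx big1 ?addr0; last by move=> T /negbTE; rewrite eq_sym => ->.
  rewrite (bigD1 (S :\ i)) //= eqxx big1 ?addr0; last by move=> T /negbTE; rewrite eq_sym => ->.
  by case: (i \in S) => /=; rewrite ?mul1r ?mul0r ?addr0; lra.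
exists (fun T => \sum_S lam S * K S T); split.
- move=> T; apply: sumr_ge0 => S _; apply: mulr_ge0 => //.
  rewrite /K; apply: addr_ge0; first by apply: mulr_ge0 => //; case: ifP.
  by rewrite !mulr_ge0 // subr_ge0.
- move=> T nT; apply: big1 => S _.
  have [ST|nST] := eqVneq S T; first by rewrite ST lamI // mul0r.
  have [SiT|nSiT] := eqVneq (S :\ i) T.
    have -> : lam S = 0; last by rewrite mul0r.
    apply: lamI; apply: contra nT => iS; apply: indep_sub iS.
    by rewrite -SiT subD1set.
  by rewrite /K (negbTE nST) (negbTE nSiT) !mulr0 mul0r addr0 mulr0.
- rewrite exchange_big /=.
  under eq_bigr => S _ do rewrite -mulr_sumr sumK mulr1.
  exact: lam1.
- move=> j; rewrite hz.
  under [RHS]eq_bigr => T _ do rewrite mulr_suml.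
  rewrite exchange_big /=.
  have [->|nji] := eqVneq j i; rewrite ?eqxx ?(negbTE nji) lamy.
    rewrite mulr_sumr; apply: eq_bigr => S _.
    under eq_bigr => T _ do rewrite -mulrA.
    rewrite mulrCA -mulr_sumr; congr (_ * _).
    rewrite /K; under eq_bigr => T _ do rewrite mulrDl.
    rewrite big_split /=.
    rewrite (bigD1 S) //= eqxx big1 ?addr0; last first.
      by move=> T /negbTE; rewrite eq_sym => ->; rewrite !mul0r.
    rewrite big1 ?addr0; last first.
      by move=> T _; case: eqP => [<-|]; rewrite ?setD11 ?mulr0 ?mul0r.
    by case: (i \in S); rewrite ?mul1r ?mulr1 ?mulr0.
  apply: eq_bigr => S _.
  under eq_bigr => T _ do rewrite -mulrA.
  rewrite -mulr_sumr; congr (_ * _).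
  rewrite /K; under eq_bigr => T _ do rewrite mulrDl.
  rewrite big_split /=.
  rewrite (bigD1 S) //= eqxx big1 ?addr0; last first.
    by move=> T /negbTE; rewrite eq_sym => ->; rewrite !mul0r.
  rewrite (bigD1 (S :\ i)) //= eqxx big1 ?addr0; last first.
    by move=> T /negbTE; rewrite eq_sym => ->; rewrite mulr0 mul0r.
  rewrite in_setD1 nji /=.
  by case: (i \in S); case: (j \in S); rewrite /= ?mul1r ?mulr1 ?mulr0 ?mul0r ?addr0 ?add0r; lra.
Qed.

Lemma poly_ext (R : realType) (n : nat) (Mt : matroid n) (y z : 'I_n -> R) :
  in_matroid_polytope Mt y -> (forall i, z i = y i) -> in_matroid_polytope Mt z.
Proof.
move=> [lam [h1 h2 h3 h4]] e; exists lam; split=> // i; by rewrite e h4.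
Qed.

Lemma poly_down (R : realType) (n : nat) (Mt : matroid n) (y z : 'I_n -> R) :
  in_matroid_polytope Mt y -> (forall i, 0 <= z i <= y i) ->
  in_matroid_polytope Mt z.
Proof.
move=> Py.
suff H : forall m, forall z, (forall i, 0 <= z i <= y i) ->
   (forall i : 'I_n, (m <= i)%N -> z i = y i) -> in_matroid_polytope Mt z.
  by move=> hz; apply: (H n) => // i; rewrite leqNgt ltn_ord.
elim=> [|m IH] {}z hz hm.
  by apply: poly_ext Py _ => i; apply: hm.
case: (ltnP m n) => [mn|nm]; last first.
  apply: IH => // i; rewrite leqNgt (leq_trans (ltn_ord i) nm) //.
pose i0 := Ordinal mn.
pose z2 := fun j => if j == i0 then y i0 else z j.
have P2 : in_matroid_polytope Mt z2.
  apply: IH.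
    move=> j; rewrite /z2; case: eqP => [->|_]; last exact: hz.
    by have /andP[a b] := hz i0; rewrite (le_trans a b) lexx.
  move=> j; rewrite /z2; case: eqP => [->//|nj] mj; apply: hm.
  rewrite ltn_neqAle mj andbT; apply/eqP => e; apply: nj; apply: val_inj => /=.
  by rewrite -e.
have /andP[z0 zy] := hz i0.
have [y0|yn0] := eqVneq (y i0) 0.
  apply: poly_ext P2 _ => j; rewrite /z2; case: eqP => [->|//].
  by rewrite y0 in zy *; apply/eqP; rewrite eq_le zy z0.
have ypos : 0 < y i0 by rewrite lt_def yn0 (le_trans z0 zy).
apply: (@poly_scale1 R n Mt z2 z i0 (z i0 / y i0)) => //.
  by rewrite divr_ge0 ?(ltW ypos) //= ler_pdivrMr // mul1r.
move=> j; rewrite /z2; case: eqP => [->|nj] //.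
by rewrite eqxx divfK.
Qed.
Lemma cs (R : realType) (n : nat) (a : 'I_n -> R) :
  \sum_i `|a i| <= Num.sqrt n%:R * Num.sqrt (\sum_i a i ^+ 2).
Proof.
rewrite -sqrtrM ?ler0n //.
have h0 : 0 <= \sum_i `|a i| by apply: sumr_ge0.
rewrite -(ger0_norm h0) -sqrtr_sqr ler_sqrt; last first.
  by apply: mulr_ge0; [exact: ler0n | apply: sumr_ge0 => i _; exact: sqr_ge0].
rewrite expr2 mulr_suml; under eq_bigr => i _ do rewrite mulr_sumr.
apply: (@le_trans _ _ (\sum_i \sum_(j < n) (a i ^+ 2 + a j ^+ 2) / 2)).
  apply: ler_sum => i _; apply: ler_sum => j _.
  have hi := real_normK (num_real (a i)).
  have hj := real_normK (num_real (a j)).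
  have := sqr_ge0 (`|a i| - `|a j|).
  rewrite -hi -hj; set A := `|a i|; set B := `|a j| => h.
  rewrite -subr_ge0.
  have -> : (A ^+ 2 + B ^+ 2) / 2 - A * B = (A - B) ^+ 2 / 2 by field.
  by rewrite divr_ge0.
under eq_bigr => i _ do rewrite -mulr_suml big_split /= sumr_const card_ord.
rewrite -mulr_suml big_split /= sumr_const card_ord.
rewrite sumrMnl -mulr_natl le_eqVlt; apply/orP; left; apply/eqP; field.
by []. Qed.

Local Open Scope classical_set_scope.
Local Open Scope ring_scope.

Lemma keyA (R : realType) (n : nat) (Mt : matroid n) (l G : nat) (M : R)
    (k : nat) (c : 'I_k -> R) (b : 'I_k -> \bar R) (w : 'I_k -> 'I_n -> R) :
  in_FGM G M c b w ->
  forall x x' : 'I_n -> R, Xl l x -> Xl l x' ->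
  Ftilde Mt c b w x <= Ftilde Mt c b w x' +
    G%:R * M ^+ 2 * Num.sqrt n%:R * eucl_dist x x'.
Proof.
move=> hF x x' [hx _] [hx' _].
have hF' := hF; case: hF' => kG hj.
set E := fun x0 => [set wtp_relax c b w y | y in Yset Mt x0].
have ne (x0 : 'I_n -> R) : (forall i, 0 <= x0 i <= 1) -> E x0 !=set0.
  move=> h0; exists (wtp_relax c b w (fun _ => 0)), (fun _ => 0) => //.
  split=> [i|//|i]; first by rewrite lexx ler01.
    exact: poly0.
  by have /andP[] := h0 i.
have ub (x0 : 'I_n -> R) : has_ubound (E x0).
  exists (\sum_j c j * fine (b j)) => _ [y _ <-].
  rewrite (wtp_real y hF); apply: ler_sum => j _.
  have [c0 _ _ _ _] := hj j.
  by apply: ler_wpM2l; [exact: ltW | by rewrite ge_min lexx].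
apply: ge_sup; first exact: ne.
move=> _ [y [y01 Py yx] <-].
set y' := fun i => Num.min (y i) (x' i).
have Yy' : Yset Mt x' y'.
  split.
  - move=> i; have /andP[a1 a2] := y01 i; have /andP[b1 b2] := hx' i.
    rewrite /y'; case: (ltP (y i) (x' i)) => _; apply/andP; split => //.
  - apply: poly_down Py _ => i; have /andP[a1 a2] := y01 i; have /andP[b1 b2] := hx' i.
    rewrite /y'; case: (ltP (y i) (x' i)) => h; apply/andP; split => //; exact: ltW.
  - by move=> i; rewrite /y' ge_min lexx orbT.
have Fy' : wtp_relax c b w y' <= Ftilde Mt c b w x'.
  by apply: ub_le_sup; [exact: ub | exists y'].
rewrite -lerBlDl; apply: le_trans (lerB (lexx _) Fy') _.
rewrite !(wtp_real _ hF) -sumrB.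
set D1 := \sum_i `|x i - x' i|.
have dy i : 0 <= y i - y' i <= `|x i - x' i|.
  have /andP[a1 a2] := y01 i; have /andP[b1 b2] := hx' i; have := yx i.
  have := ler_norm (x i - x' i).
  move=> n1 yx0; have := normr_ge0 (x i - x' i).
  rewrite /y'; case: (ltP (y i) (x' i)) => h; lra.
have D10 : 0 <= D1 by apply: sumr_ge0.
apply: (@le_trans _ _ (\sum_(j < k) M * (M * D1))).
  apply: ler_sum => j _.
  have [c0 cM _ _ wj] := hj j.
  rewrite -mulrBr.
  set s := \sum_i y i * w j i; set s' := \sum_i y' i * w j i.
  have ss' : s - s' = \sum_i (y i - y' i) * w j i.
    by rewrite /s /s' -sumrB; apply: eq_bigr => i _; rewrite mulrBl.
  have hss : 0 <= s - s' <= M * D1.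
    rewrite ss'; apply/andP; split.
      apply: sumr_ge0 => i _; have /andP[d1 _] := dy i; have [w0 _] := wj i.
      exact: mulr_ge0.
    rewrite mulrC /D1 mulr_suml; apply: ler_sum => i _.
    have /andP[d1 d2] := dy i; have [w0 wM] := wj i.
    apply: ler_pM => //; exact: le_trans (ler_norm _) wM.
  have /andP[hs1 hs2] := hss.
  apply: (@le_trans _ _ (c j * (s - s'))).
    by apply: ler_wpM2l; [exact: ltW | apply: min_lip; rewrite -subr_ge0].
  apply: ler_pM => //; exact: ltW.
rewrite sumr_const card_ord -(mulr_natl (M * (M * D1)) k).
have hM : 0 <= M ^+ 2 by exact: sqr_ge0.
apply: (@le_trans _ _ (G%:R * M ^+ 2 * D1)).
  have -> : M * (M * D1) = M ^+ 2 * D1 by rewrite expr2 mulrA.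
  rewrite -mulrA; apply: ler_wpM2r; first exact: mulr_ge0.
  by rewrite ler_nat.
rewrite -[X in _ <= X]mulrA; apply: ler_wpM2l.
  by apply: mulr_ge0 => //; exact: ler0n.
rewrite /eucl_dist /D1; exact: cs.
Qed.

Arguments keyA {R n} Mt {l G M k c b w}.

Theorem lemma17 (R : realType) (n : nat) (Mt : matroid n) (l G : nat) (M : R)
    (k : nat) (c : 'I_k -> R) (b : 'I_k -> \bar R) (w : 'I_k -> 'I_n -> R) :
  in_FGM G M c b w ->
  forall x x' : 'I_n -> R, Xl l x -> Xl l x' ->
  `|Ftilde Mt c b w x - Ftilde Mt c b w x'|
    <= G%:R * M ^+ 2 * Num.sqrt n%:R * eucl_dist x x'.
Proof.
move=> hF x x' hx hx'.
have sym : eucl_dist x' x = eucl_dist x x'.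
  by rewrite /eucl_dist; congr Num.sqrt; apply: eq_bigr => i _; rewrite -opprB sqrrN.
have h1 := keyA Mt hF _ _ hx hx'.
have h2 := keyA Mt hF _ _ hx' hx.
rewrite sym in h2.
rewrite ler_norml; apply/andP; split; lra.
Qed.
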